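(* Let $\mathcal{A}=(\Sigma,Q,q_0,\delta,F)$ be an alternating safety automaton and $p\in\Sigma$. If no two states of $\mathcal{A}$ are existentially in conflict for $p$, then $\mathcal{A}$ is in existential normal form for $p$, i.e. $\mathcal{L}(\exists^\circ p.\mathcal{A})=\mathcal{L}(\exists p.\mathcal{A})$.
   Context: $\Sigma$ is a finite set of Boolean variables; words are $w\in(2^\Sigma)^\omega$ with $k$-th letter $w[k]$. $L_\Sigma=\Sigma\cup\{\neg a:a\in\Sigma\}$; in a letter $\sigma$, $a$ is true iff $a\in\sigma$ and $\neg a$ iff $a\notin\sigma$. An alternating Büchi automaton $\mathcal{A}=(\Sigma,Q,q_0,\delta,F)$ has finite $Q$, $q_0\in Q$, $F\subseteq Q$ and $\delta:Q\to\mathbb{B}^+(Q\cup L_\Sigma)$ (positive Boolean formulas with $\wedge,\vee$, true, false over atoms in $Q\cup L_\Sigma$). $X\subseteq Q\cup L_\Sigma$ satisfies $\delta(q)$ if $\delta(q)$ is true when exactly the atoms of $X$ are true; $\mathit{mSat}(\delta(q))$ is the set of minimal satisfying sets. A run on $w$ is a $Q$-labeled tree with root labeled $q_0$ such that for each node at depth $k$ labeled $q$, with $S$ the labels of its children, $S\cup\{\ell\in L_\Sigma:\ell\text{ true in }w[k]\}$ satisfies $\delta(q)$; accepting if every infinite branch visits $F$ infinitely often; $\mathcal{L}(\mathcal{A})$ is the set of words with an accepting run. $\mathcal{A}$ is a safety automaton if $F=Q$. $\mathcal{L}(\exists p.\mathcal{A})$ is the set of $w\in(2^{\Sigma\setminus\{p\}})^\omega$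 such that some $w'\in(2^\Sigma)^\omega$ with $w'[k]\setminus\{p\}=w[k]$ for all $k$ lies in $\mathcal{L}(\mathcal{A})$. $\exists^\circ p.\mathcal{A}=(\Sigma\setminus\{p\},Q,q_0,\delta',F)$ with $\delta'(q)=\delta(q)[p\mapsto1]\vee\delta(q)[p\mapsto0]$, where $B[p\mapsto1]$ replaces atom $p$ by true and $\neg p$ by false, and $B[p\mapsto0]$ the reverse. An existential unfolding of $\mathcal{A}$ is a DAG $(V,E)$ with $V\subseteq(Q\cup L_\Sigma)\times\mathbb{N}$, $(q_0,0)\in V$, edges only from $Q\times\{i\}$ to $(Q\cup L_\Sigma)\times\{i+1\}$, where $V,E$ are the smallest sets such that for every $(q,i)\in V$ with $q\in Q$ there is a chosen $X\in\mathit{mSat}(\delta(q))$ with $X\times\{i+1\}\subseteq V$ and $\{(q,i)\}\times(X\times\{i+1\})\subseteq E$ (exactly the successors of $(q,i)$). $\mathit{reach}(v)$ denotes the vertices reachable from $v$ by a (possibly empty) path. Two states $q,q'$ are existentially in conflict for $p$ if there exist an existential unfolding $(V,E)$ and $i\in\mathbb{N}$ with $(q,i),(q',i)\in V$, and $i'\in\mathbb{N}$ with $(p,i')\in\mathit{reach}(q,i)$ and $(\neg p,i')\in\mathit{reach}(q',i)$. *)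

(* Defs.v *)
From mathcomp Require Import all_boot.
Set Implicit Arguments. Unset Strict Implicit. Unset Printing Implicit Defensive.

(* Atoms Q ∪ L_Σ : inl q = state q ; inr (inl a) = literal a ; inr (inr a) = literal ¬a *)
Definition atom (Q Var : finType) : finType := (Q + (Var + Var))%type.
Definition AQ {Q Var : finType} (q : Q) : atom Q Var := inl q.
Definition APos {Q Var : finType} (a : Var) : atom Q Var := inr (inl a).
Definition ANeg {Q Var : finType} (a : Var) : atom Q Var := inr (inr a).

Inductive pbf (A : Type) : Type :=
| PTrue | PFalse | PAt of A | PAnd of pbf A & pbf A | POr of pbf A & pbf A.
Arguments PTrue {A}. Arguments PFalse {A}.

Fixpoint sat {A : Type} (X : A -> Prop) (f : pbf A) : Prop :=
  match f with
  | PTrue => True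
  | PFalse => False
  | PAt x => X x
  | PAnd g h => sat X g /\ sat X h
  | POr g h => sat X g \/ sat X h
  end.

Definition is_mSat {A : finType} (f : pbf A) (X : {set A}) : Prop :=
  sat (fun x => x \in X) f /\
  forall Y : {set A}, Y \subset X -> sat (fun x => x \in Y) f -> Y = X.

Section Automata.
Variables (Var Q : finType).

Definition word := nat -> {set Var}.

Definition lit_true (sigma : {set Var}) (x : atom Q Var) : Prop :=
  match x with
  | inl _ => False
  | inr (inl a) => a \in sigma
  | inr (inr a) => a \notin sigma
  end.

(* Runs: Q-labelled trees. Nodes are finite sequences of child indices,
   T is the (prefix-closed) set of nodes, lab the labelling; a node v has depth size v. *)
Definition is_run (q0 : Q) (delta : Q -> pbf (atom Q Var)) (w : word)
    (T : seq nat -> Prop) (lab : seq nat -> Q) : Prop :=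
  [/\ T [::], lab [::] = q0,
      (forall v i, T (rcons v i) -> T v) &
      forall v, T v ->
        sat (fun x : atom Q Var => match x with
                 | inl q => exists i, T (rcons v i) /\ lab (rcons v i) = q
                 | inr _ => lit_true (w (size v)) x
                 end) (delta (lab v))].

Definition accepting_run (F : {set Q}) (T : seq nat -> Prop) (lab : seq nat -> Q) : Prop :=
  forall b : nat -> nat, (forall n, T (mkseq b n)) ->
    forall N, exists2 n, N <= n & lab (mkseq b n) \in F.

Definition accepts (q0 : Q) (delta : Q -> pbf (atom Q Var)) (F : {set Q}) (w : word) : Prop :=
  exists T lab, is_run q0 delta w T lab /\ accepting_run F T lab.

Definition safety (F : {set Q}) : Prop := F = setT.

Fixpoint psubst (p : Var) (b : bool) (f : pbf (atom Q Var)) : pbf (atom Q Var) :=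
  match f with
  | PTrue => PTrue
  | PFalse => PFalse
  | PAt (inl q) => PAt (inl q)
  | PAt (inr (inl a)) => if a == p then (if b then PTrue else PFalse) else PAt (APos a)
  | PAt (inr (inr a)) => if a == p then (if b then PFalse else PTrue) else PAt (ANeg a)
  | PAnd g h => PAnd (psubst p b g) (psubst p b h)
  | POr g h => POr (psubst p b g) (psubst p b h)
  end.

Definition delta_exc (p : Var) (delta : Q -> pbf (atom Q Var)) (q : Q) : pbf (atom Q Var) :=
  POr (psubst p true (delta q)) (psubst p false (delta q)).

(* words over Σ \ {p}, encoded as words over Σ never containing p *)
Definition word_without (p : Var) (w : word) : Prop := forall k, p \notin w k.

Definition lang_exc (p : Var) (q0 : Q) (delta : Q -> pbf (atom Q Var)) (F : {set Q})
    (w : word) : Prop :=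
  word_without p w /\ accepts q0 (delta_exc p delta) F w.

Definition lang_ex (p : Var) (q0 : Q) (delta : Q -> pbf (atom Q Var)) (F : {set Q})
    (w : word) : Prop :=
  word_without p w /\
  exists w' : word, (forall k, w' k :\ p = w k) /\ accepts q0 delta F w'.

(* An unfolding is determined by the choice
   ch q i of a minimal satisfying set at each vertex (q,i) ∈ Q × nat. *)
Inductive inV (q0 : Q) (ch : Q -> nat -> {set atom Q Var}) : atom Q Var -> nat -> Prop :=
| inV_root : inV q0 ch (AQ q0) 0
| inV_step q i x : inV q0 ch (AQ q) i -> x \in ch q i -> inV q0 ch x i.+1.

Definition inE (q0 : Q) (ch : Q -> nat -> {set atom Q Var})
    (u v : atom Q Var * nat) : Prop :=
  exists q, [/\ u.1 = AQ q, inV q0 ch (AQ q) u.2, v.2 = u.2.+1 & v.1 \in ch q u.2].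

Definition is_ex_unfolding (q0 : Q) (delta : Q -> pbf (atom Q Var))
    (ch : Q -> nat -> {set atom Q Var}) : Prop :=
  forall q i, inV q0 ch (AQ q) i -> is_mSat (delta q) (ch q i).

Inductive reach (q0 : Q) (ch : Q -> nat -> {set atom Q Var}) (u : atom Q Var * nat) :
    atom Q Var * nat -> Prop :=
| reach_refl : reach q0 ch u u
| reach_step v v' : reach q0 ch u v -> inE q0 ch v v' -> reach q0 ch u v'.

Definition ex_conflict (q0 : Q) (delta : Q -> pbf (atom Q Var)) (p : Var) (q q' : Q) : Prop :=
  exists ch, is_ex_unfolding q0 delta ch /\
  exists i, inV q0 ch (AQ q) i /\ inV q0 ch (AQ q') i /\
  exists i', reach q0 ch (AQ q, i) (APos p, i') /\ reach q0 ch (AQ q', i) (ANeg p, i').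

End Automata.

(* Main.v *)
Require Import Defs.
From mathcomp Require Import all_boot.
From Stdlib Require Import ClassicalEpsilon.
Set Implicit Arguments. Unset Strict Implicit. Unset Printing Implicit Defensive.

Lemma sat_mono (A : Type) (P P' : A -> Prop) f :
  (forall x, P x -> P' x) -> sat P f -> sat P' f.
Proof.
move=> H; elim: f => /=.
- by [].
- by [].
- exact: H.
- by move=> g IHg h IHh [/IHg ? /IHh ?].
- by move=> g IHg h IHh [/IHg|/IHh]; [left|right].
Qed.

Fixpoint bsat (A : finType) (X : {set A}) (f : pbf A) : bool :=
  match f with
  | PTrue => true | PFalse => false | PAt x => x \in X
  | PAnd g h => bsat X g && bsat X h
  | POr g h => bsat X g || bsat X h end.

Lemma bsatP (A : finType) (X : {set A}) f : sat (fun x => x \in X) f <-> bsat X f.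
Proof.
elim: f => //= [g IHg h IHh|g IHg h IHh].
  by rewrite IHg IHh; split; [case=> -> ->|case/andP].
by rewrite IHg IHh; split; [case=> ->; rewrite ?orbT|case/orP; [left|right]].
Qed.

Lemma exists_mSat (A : finType) (P : A -> Prop) (f : pbf A) :
  sat P f -> exists X : {set A}, is_mSat f X /\ forall x, x \in X -> P x.
Proof.
move=> H.
pose S := [set x | if excluded_middle_informative (P x) then true else false].
have PS : forall x, x \in S -> P x.
  by move=> x; rewrite inE; case: excluded_middle_informative.
have HS : bsat S f.
  apply/bsatP; apply: sat_mono H => x Px; rewrite inE.
  by case: excluded_middle_informative.
have [X /minsetP [bX minX] sXS] := minset_exists (P := fun Y => bsat Y f) HS.
exists X; split; last by move=> x /(subsetP sXS); apply: PS.
split; first exact/bsatP.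
by move=> Y sYX /bsatP bY; apply: minX.
Qed.

Section S.
Variables (Var Q : finType).

Lemma psubst_sat1 (p : Var) (b : bool) (P : atom Q Var -> Prop) f :
  sat P (psubst p b f) ->
  sat (fun x => P x \/ x = (if b then APos p else ANeg p)) f.
Proof.
elim: f => //= [x|g IHg h IHh|g IHg h IHh].
- case: x => [q|[a|a]] /=; first by left.
  + case: eqP => [->|_]; last by left.
    by case: b => //= _; right.
  + case: eqP => [->|_]; last by left.
    by case: b => //= _; right.
- by case=> /IHg ? /IHh ?.
- by case=> [/IHg|/IHh]; [left|right].
Qed.

Lemma psubst_sat2 (p : Var) (b : bool) (P P2 : atom Q Var -> Prop) f :
  (forall x, P x -> match x with
     | inl _ => P2 x
     | inr (inl a) => if a == p then is_true b else P2 x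
     | inr (inr a) => if a == p then is_true (~~ b) else P2 x end) ->
  sat P f -> sat P2 (psubst p b f).
Proof.
move=> H; elim: f => //= [x|g IHg h IHh|g IHg h IHh].
- case: x => [q|[a|a]] /= Hx; have := H _ Hx => //=.
  + by case: eqP => _ //; move: (b) => [].
  + by case: eqP => _ //; move: (b) => [].
- by case=> /IHg ? /IHh ?.
- by case=> [/IHg|/IHh]; [left|right].
Qed.
End S.

Section Dir2.
Variables (Var Q : finType) (q0 : Q) (delta : Q -> pbf (atom Q Var)) (F : {set Q}) (p : Var).

Lemma dir2 (w : word Var) : lang_ex p q0 delta F w -> lang_exc p q0 delta F w.
Proof.
move=> [wp [w' [Hw [T [lab [[T0 L0 Tpre Tsat] Hacc]]]]]]; split => //.
exists T, lab; split => //; split => // v Tv.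
have Hs := Tsat v Tv; rewrite /delta_exc /=.
case Hb: (p \in w' (size v)); [left|right];
  (apply: (psubst_sat2 _ Hs) => -[q|[a|a]] //=; case: eqP => [->|/eqP ap] //=;
   by rewrite ?Hb // -Hw in_setD1 ap).
Qed.
End Dir2.

Section Dir1.
Variables (Var Q : finType) (q0 : Q) (delta : Q -> pbf (atom Q Var)) (p : Var).
Variable w : word Var.
Hypothesis wp : word_without p w.

Definition good (q : Q) (k : nat) : Prop :=
  exists T lab, is_run q (delta_exc p delta) (fun n => w (k + n)) T lab.

Definition inv (q : Q) (k : nat) (X : {set atom Q Var}) : Prop :=
  forall x, x \in X -> match x with
    | inl q' => good q' k.+1
    | inr (inl a) => a != p -> a \in w k
    | inr (inr a) => a != p -> a \notin w k end.

Lemma good_step q k : good q k ->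
  exists X, is_mSat (delta q) X /\ inv q k X.
Proof.
move=> [T [lab [T0 L0 Tpre Tsat]]].
have Hs := Tsat _ T0; rewrite L0 /delta_exc in Hs.
pose Pg := fun x : atom Q Var => match x with
   | inl q' => good q' k.+1 | inr _ => lit_true (w k) x end.
have {}Hs : sat Pg (POr (psubst p true (delta q)) (psubst p false (delta q))).
  apply: sat_mono Hs => -[q'|[a|a]] /=; rewrite ?addn0 //.
  move=> [i [Ti Li]]; exists (fun v => T (i :: v)), (fun v => lab (i :: v)).
  split; [exact Ti|exact Li| |].
    by move=> v j; apply: (Tpre (i :: v)).
  move=> v Tv; have := Tsat _ Tv; apply: sat_mono => -[q''|[a|a]] //=;
    by rewrite addnS.
have [b Hb] : exists b : bool, sat Pg (psubst p b (delta q)).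
  by case: Hs => H; [exists true|exists false].
have [X [mX HX]] := exists_mSat (psubst_sat1 Hb).
exists X; split => // x /HX [].
  case: x => [q'|[a|a]] //=; by move=> H _.
by case: b {Hb HX} => -> //=; rewrite eqxx.
Qed.

Definition ch (q : Q) (k : nat) : {set atom Q Var} :=
  epsilon (inhabits set0) (fun X => is_mSat (delta q) X /\ inv q k X).

Lemma ch_spec q k : good q k -> is_mSat (delta q) (ch q k) /\ inv q k (ch q k).
Proof. by move=> /good_step H; exact: (epsilon_spec (inhabits set0) _ H). Qed.

Hypothesis g0 : good q0 0.

Lemma inV_good' x k : inV q0 ch x k -> forall q, x = AQ q -> good q k.
Proof.
move=> H; elim: H => [q [<-] //|q i y _ IH yin q' yq].
by have [_ /(_ _ yin)] := ch_spec (IH _ erefl); rewrite yq.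
Qed.

Lemma inV_good q k : inV q0 ch (AQ q) k -> good q k.
Proof. by move/inV_good'; apply. Qed.

Lemma unf : is_ex_unfolding q0 delta ch.
Proof. by move=> q i /inV_good /ch_spec []. Qed.

Hypothesis nc : forall q q', ~ ex_conflict q0 delta p q q'.

Lemma noconf q q' k : inV q0 ch (AQ q) k -> inV q0 ch (AQ q') k ->
  APos p \in ch q k -> ANeg p \in ch q' k -> False.
Proof.
move=> iq iq' pq pq'; apply: (nc (q := q) (q' := q')).
exists ch; split; first exact: unf.
exists k; split => //; split => //; exists k.+1; split.
  apply: reach_step; first exact: reach_refl.
  by exists q; split.
apply: reach_step; first exact: reach_refl.
by exists q'; split.
Qed.

Definition needp k : Prop := exists q, inV q0 ch (AQ q) k /\ APos p \in ch q k.
Definition w' (k : nat) : {set Var} :=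
  if excluded_middle_informative (needp k) then p |: w k else w k.

Lemma w'E k : w' k :\ p = w k.
Proof.
rewrite /w'; destruct (excluded_middle_informative (needp k)); first by rewrite setU1K.
apply/setP => a; rewrite in_setD1; case: eqP => [->|] //=.
by rewrite (negbTE (wp k)).
Qed.

Definition st (i : nat) : Q := nth q0 (enum Q) i.

Fixpoint nf (q : Q) (k : nat) (v : seq nat) : option Q :=
  match v with
  | [::] => Some q
  | i :: v' => if AQ (st i) \in ch q k then nf (st i) k.+1 v' else None
  end.

Lemma nf_rcons q k v i : nf q k (rcons v i) =
  match nf q k v with
  | Some q' => if AQ (st i) \in ch q' (k + size v) then Some (st i) else None
  | None => None end.
Proof.
elim: v q k => [|j v IH] q k /=; first by rewrite addn0.
by case: ifP => // _; rewrite IH addSnnS.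
Qed.

Lemma nf_inV v q : nf q0 0 v = Some q -> inV q0 ch (AQ q) (size v).
Proof.
elim/last_ind: v q => [|v i IH] q /=; first by case=> <-; exact: inV_root.
rewrite nf_rcons size_rcons; case E: (nf q0 0 v) => [q'|] //.
case: ifP => // Hin [<-]; exact: (inV_step (IH _ E) Hin).
Qed.

Lemma st_index q : st (index q (enum Q)) = q.
Proof. by rewrite /st nth_index // mem_enum. Qed.

Lemma dir1_run : is_run q0 delta w' (fun v => nf q0 0 v <> None)
   (fun v => odflt q0 (nf q0 0 v)).
Proof.
split => //.
  move=> v i; rewrite nf_rcons; by case: (nf q0 0 v).
move=> v; case E: (nf q0 0 v) => [q|] // _ /=.
have iq := nf_inV E.
have [[Hs _] Hinv] := ch_spec (inV_good iq).
apply: sat_mono Hs => x xin; have := Hinv _ xin.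
case: x xin => [q'|[a|a]] xin /=.
- move=> _; exists (index q' (enum Q)); rewrite nf_rcons E st_index add0n xin.
  by split.
- rewrite /w'; destruct (excluded_middle_informative (needp (size v))) as [Hn|Hn]; rewrite /=.
    move=> H; rewrite in_setU1; have [//|ap] := eqVneq a p; by rewrite H.
  have [eap|ap H] := eqVneq a p; last by apply: H.
  move=> _; exfalso; apply: Hn; exists q; split => //; by rewrite -eap.
- rewrite /w'; destruct (excluded_middle_informative (needp (size v))) as [Hn|Hn]; rewrite /=.
    rewrite in_setU1; have [eap _|ap H] := eqVneq a p; last by rewrite /= H.
    rewrite eap in xin.
    by case: Hn => q'' [iq'' pq'']; exfalso; apply: (noconf iq'' iq pq'' xin).
  have [-> _|ap H] := eqVneq a p; last by apply: H.
  exact: wp.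
Qed.

Lemma dir1 (F : {set Q}) : safety F -> lang_ex p q0 delta F w.
Proof.
move=> sF; split => //; exists w'; split; first exact: w'E.
exists (fun v => nf q0 0 v <> None), (fun v => odflt q0 (nf q0 0 v)).
split; first exact: dir1_run.
by move=> b _ N; exists N => //; rewrite sF inE.
Qed.
End Dir1.

Theorem mainTheorem4 (Var Q : finType) (q0 : Q) (delta : Q -> pbf (atom Q Var))
    (F : {set Q}) (p : Var) :
  safety F ->
  (forall q q' : Q, ~ ex_conflict q0 delta p q q') ->
  forall w : word Var,
    lang_exc p q0 delta F w <-> lang_ex p q0 delta F w.
Proof.
move=> sF nc w; split; last exact: dir2.
move=> [wp [T [lab [R _]]]].
apply: (dir1 wp _ nc sF).
by exists T, lab.
Qed.
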